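(* Fix $L\in\mathbb Z$ and work on $Y_L=\mathbb R\times(0,2^L]\times\mathbb R$ with the objects described in the context. The function $\mathcal C(A)=\mathcal M(\mathcal N(\mathcal Q(A)))$, $A\subseteq Y_L$, with $\mathcal E=\mathcal D_L$, is a $\mu$-covering function with parameter $\Phi$ for every $\Phi\ge2$.
   Context: Dyadic intervals $I(m,l)=(2^lm,2^l(m+1)]$; tiles $H(m,l,n)=I(m,l)\times(2^{l-1},2^l]\times I(n,-l)$. $\mathcal D_L$ = strips $D(m,l)=I(m,l)\times(0,2^l]\times\mathbb R$ with $l\le L$, $\sigma(D(m,l))=2^l$. $\mathcal T_L$ = trees $T(m,l,n)=\bigcup_{l'\le l}\bigcup_{m':\,I(m',l')\subseteq I(m,l)}H(m',l',N(n,l'))$ with $l\le L$ ($N(n,l')$ the integer with $I(n,-l)\subseteq I(N(n,l'),-l')$), $\tau(T(m,l,n))=2^l$. Outer measures on $Y_L$: $\mu(A)=\inf\{\sum_{S\in\mathcal S'}\sigma(S):\mathcal S'\subseteq\mathcal D_L,A\subseteq\bigcup\mathcal S'\}$, $\nu$ likewise from $(\mathcal T_L,\tau)$. $\pi$ = projection onto first coordinate, $|\cdot|$ Lebesgue measure. For $E\in\mathcal D_L$, $E_+=\{(x,s,\xi)\in E:s>\sigma(E)/2\}$. $\mathcal Q(A)=\{E\in\mathcal D_L:E_+\cap A\ne\varnothing\}$. For $\mathcal D_1\subseteq\mathcal D_L$: $\mathcal N(\mathcal D_1)=\{E\in\mathcal D_L:|\pi(E)\cap\pi(\bigcup\mathcal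 D_1)|\ge|\pi(E)|/2\}$, and $\mathcal M(\mathcal D_1)$ is the subcollection of elements of $\mathcal D_1$ maximal with respect to inclusion. A $\mu$-covering function with parameter $\Phi$: a map $\mathcal C$ assigning to each $A$ a subcollection of pairwise disjoint elements of $\mathcal E$ such that $\mathbf B_{\mathcal C}(A)=\bigcup_{E\in\mathcal C(A)}E$ satisfies $A\subseteq\mathbf B_{\mathcal C}(A)$, $\mu(\mathbf B_{\mathcal C}(A))\le\Phi\mu(A)$, and $A_1\subseteq A_2\Rightarrow\mathbf B_{\mathcal C}(A_1)\subseteq\mathbf B_{\mathcal C}(A_2)$. *)

(* Defs.v *)
From HB Require Import structures.
From mathcomp Require Import all_boot all_order all_algebra.
From mathcomp Require Import all_classical all_reals all_analysis.
Set Implicit Arguments. Unset Strict Implicit. Unset Printing Implicit Defensive.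
Import Order.TTheory GRing.Theory Num.Theory.
Local Open Scope classical_set_scope.
Local Open Scope ring_scope.

Section Defs.
Variable R : realType.

(* points (x, s, xi) of R x R x R *)
Definition pt := (R * R * R)%type.

Definition YL (L : int) : set pt :=
  [set p | 0 < p.1.2 /\ p.1.2 <= (2%:R : R) ^ L].

Definition dyI (m l : int) : set R :=
  `](2%:R ^ l * m%:~R), (2%:R ^ l * (m + 1)%:~R)].

Definition strip (i : int * int) : set pt :=
  [set p | dyI i.1 i.2 p.1.1 /\ 0 < p.1.2 /\ p.1.2 <= (2%:R : R) ^ i.2].

Definition sigma (i : int * int) : R := 2%:R ^ i.2.

(* the collection D_L (as a set of indices) *)
Definition DL (L : int) : set (int * int) := [set i | (i.2 <= L)%R].

Definition bigstrip (S : set (int * int)) : set pt := \bigcup_(i in S) strip i.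

Definition mu (L : int) (A : set pt) : \bar R :=
  ereal_inf [set (\esum_(i in S) (sigma i)%:E)%E | S in
     [set S | S `<=` DL L /\ A `<=` bigstrip S]].

Definition proj1set (A : set pt) : set R := (fun p : pt => p.1.1) @` A.

Definition strip_plus (i : int * int) : set pt :=
  [set p | strip i p /\ sigma i / 2%:R < p.1.2].

Definition Qc (L : int) (A : set pt) : set (int * int) :=
  [set i | DL L i /\ strip_plus i `&` A !=set0].

Definition Nc (L : int) (D1 : set (int * int)) : set (int * int) :=
  [set i | DL L i /\
    (lebesgue_measure (proj1set (strip i)) * (2%:R^-1)%:E <=
     lebesgue_measure (proj1set (strip i) `&` proj1set (bigstrip D1)))%E].

Definition Mc (D1 : set (int * int)) : set (int * int) :=
  [set i | D1 i /\ forall j, D1 j -> strip i `<=` strip j -> strip i = strip j].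

Definition mu_covering_function (L : int) (C : set pt -> set (int * int)) (Phi : R) :=
  (forall A, A `<=` YL L ->
     [/\ C A `<=` DL L,
         (forall i j, C A i -> C A j -> strip i <> strip j ->
            strip i `&` strip j = set0),
         A `<=` bigstrip (C A) &
         (mu L (bigstrip (C A)) <= Phi%:E * mu L A)%E]) /\
  (forall A1 A2, A1 `<=` YL L -> A2 `<=` YL L -> A1 `<=` A2 ->
     bigstrip (C A1) `<=` bigstrip (C A2)).

End Defs.

(* Main.v *)
Require Import Defs.
From HB Require Import structures.
From mathcomp Require Import all_boot all_order all_algebra.
From mathcomp Require Import all_classical all_reals all_analysis.
From mathcomp Require Import zify ring lra.
Import Order.TTheory GRing.Theory Num.Theory.
Local Open Scope classical_set_scope.
Local Open Scope ring_scope.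


Section Aux.
Variable R : realType.
Local Notation p2 l := ((2%:R : R) ^ l).
Local Notation dI := (@dyI R).

Lemma p2_gt0 (l : int) : 0 < p2 l.
Proof. by apply: exprz_gt0. Qed.

Lemma dyIP (m l : int) (x : R) :
  dI m l x <-> p2 l * m%:~R < x /\ x <= p2 l * (m + 1)%:~R.
Proof. by rewrite /dyI /= in_itv /=; split => [/andP|[-> ->]]. Qed.

Lemma dyI_top (m l : int) : dI m l (p2 l * (m + 1)%:~R).
Proof.
apply/dyIP; split => //; rewrite ltr_pM2l; last exact: p2_gt0.
rewrite ltr_int; lia.
Qed.

Lemma dyI_cover (l : int) (x : R) : exists m, dI m l x.
Proof.
exists (Num.ceil (x / p2 l) - 1); apply/dyIP.
have := ceil_itv (x / p2 l); set c := Num.ceil _ => /andP[h1 h2].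
have hp := p2_gt0 l.
split.
  by rewrite mulrC -ltr_pdivlMr.
by rewrite mulrC -ler_pdivrMr // addrNK.
Qed.

Lemma p2_split (l l' : int) : l <= l' -> exists N : nat, p2 l' = p2 l * N%:R.
Proof.
move=> h; have [k hk] : exists k : nat, l' = l + k%:Z.
  by exists `|l' - l|%N; lia.
exists (2 ^ k)%N; rewrite hk expfzDr ?pnatr_eq0 // natrX.
by [].
Qed.

Lemma dyI_nest (m l m' l' : int) (x : R) : l <= l' ->
  dI m l x -> dI m' l' x -> dI m l `<=` dI m' l'.
Proof.
move=> hl /dyIP[h1 h2] /dyIP[h3 h4].
have [N hN] := @p2_split l l' hl.
have hp := p2_gt0 l.
have e1 : (m' * N%:Z)%:~R < (m + 1)%:~R :> R.
  rewrite -(ltr_pM2l hp) intrM mulrA -[(N%:Z)%:~R]/(N%:R : R)  -mulrA [_ * N%:R]mulrC mulrA -hN; lra.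
have e2 : m%:~R < ((m' + 1) * N%:Z)%:~R :> R.
  rewrite -(ltr_pM2l hp) intrM [_ * (N%:Z)%:~R]mulrC mulrA -[(N%:Z)%:~R]/(N%:R : R) -hN; lra.
rewrite ltr_int in e1; rewrite ltr_int in e2.
have f1 : (m' * N%:Z)%:~R <= m%:~R :> R by rewrite ler_int; lia.
have f2 : (m + 1)%:~R <= ((m' + 1) * N%:Z)%:~R :> R by rewrite ler_int; lia.
have E1 : p2 l * N%:R * m'%:~R = p2 l * (m' * N%:Z)%:~R.
  by rewrite intrM -[(N%:Z)%:~R]/(N%:R : R); ring.
have E2 : p2 l * N%:R * (m' + 1)%:~R = p2 l * ((m' + 1) * N%:Z)%:~R.
  by rewrite intrM -[(N%:Z)%:~R]/(N%:R : R); ring.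
move=> y /dyIP[y1 y2]; apply/dyIP; rewrite hN E1 E2; split.
  by apply: le_lt_trans y1; rewrite ler_pM2l.
by apply: le_trans y2 _; rewrite ler_pM2l.
Qed.

Lemma dyI_same (m m' l : int) : dI m l `<=` dI m' l -> m = m'.
Proof.
move=> /(_ _ (dyI_top m l)) /dyIP[h1 h2].
have hp := p2_gt0 l.
rewrite ltr_pM2l // ltr_int in h1; rewrite ler_pM2l // ler_int in h2; lia.
Qed.


Local Notation st := (@strip R).

Lemma p2_le (l l' : int) : (p2 l <= p2 l') = (l <= l').
Proof. by rewrite ler_eXz2l // ltr1n. Qed.

Lemma p2_lt (l l' : int) : (p2 l < p2 l') = (l < l').
Proof. by rewrite ltr_eXz2l // ltr1n. Qed.

Lemma strip_sub (i j : int * int) :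
  st i `<=` st j <-> i.2 <= j.2 /\ dI i.1 i.2 `<=` dI j.1 j.2.
Proof.
split.
  move=> h.
  have hij : i.2 <= j.2.
    have := h ((p2 i.2 * (i.1 + 1)%:~R, p2 i.2), 0).
    case; first by split => //=; [exact: dyI_top | split => //; exact: p2_gt0].
    by move=> _ [_] /=; rewrite p2_le.
  split => // y hy.
  by have [] := h ((y, p2 i.2), 0) (conj hy (conj (p2_gt0 _) (lexx _))).
move=> [hl hd] p [h1 [h2 h3]]; split; first exact: hd.
by split => //; apply: le_trans h3 _; rewrite p2_le.
Qed.

Lemma strip_inj (i j : int * int) : st i = st j -> i = j.
Proof.
move=> e.
have [h1 h2] := (strip_sub i j).1 (ltac:(rewrite e; exact: subset_refl)).
have [h3 h4] := (strip_sub j i).1 (ltac:(rewrite e; exact: subset_refl)).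
have el : i.2 = j.2 by apply/eqP; rewrite eq_le h1 h3.
move: h2 el {h1 h3 h4 e}; case: i => m l; case: j => m' l' /= h2 el.
by subst l'; rewrite (@dyI_same m m' l h2).
Qed.

Lemma strip_meet (i j : int * int) : st i `&` st j !=set0 ->
  st i `<=` st j \/ st j `<=` st i.
Proof.
move=> [p [[a1 _] [a2 _]]].
have [h|h] := leP i.2 j.2.
  by left; apply/strip_sub; split => //; exact: dyI_nest a1 a2.
by right; apply/strip_sub; split; [exact: ltW | exact: dyI_nest (ltW h) a2 a1].
Qed.

Lemma proj1_strip (i : int * int) : proj1set (st i) = dI i.1 i.2.
Proof.
apply/seteqP; split => [x [p [hp _] <-]|x hx]; first exact: hp.
by exists ((x, p2 i.2), 0) => //; split => //; split => //; exact: p2_gt0.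
Qed.

Lemma proj1_bigstrip (D : set (int * int)) :
  proj1set (bigstrip D) = \bigcup_(j in D) dI j.1 j.2.
Proof.
apply/seteqP; split => [x [p [j Dj [hp _]] <-]|x [j Dj hx]].
  by exists j.
exists ((x, p2 j.2), 0) => //; exists j => //; split => //; split => //.
exact: p2_gt0.
Qed.


Lemma exists_max (L : int) (D : set (int * int)) (i : int * int) :
  D `<=` DL L -> D i -> exists j, Mc R D j /\ st i `<=` st j.
Proof.
move=> DDL Di.
suff H : forall n : nat, forall i, D i -> L - i.2 <= n%:Z ->
    exists j, Mc R D j /\ st i `<=` st j.
  have hL : i.2 <= L := DDL _ Di.
  by apply: (H `|L - i.2|%N) => //; lia.
elim => [|n IH] {}i {}Di hn.
all: have [hmax|] := pselect (forall k, D k -> st i `<=` st k -> st i = st k);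
  first by exists i; split.
all: move=> /existsNP [k /not_implyP [Dk /not_implyP [sik neq]]].
all: have [hl hd] := (strip_sub i k).1 sik.
all: have hlt : i.2 < k.2.
1,3: rewrite lt_neqAle hl andbT; apply/eqP => e; apply: neq; congr st.
1,2: by move: hd e; case: i {Di hn sik hl} => m l; case: k {Dk} => m' l' /= hd e;
  subst l'; rewrite (@dyI_same m m' l hd).
all: have hkL : k.2 <= L := DDL _ Dk.
  by exfalso; lia.
have [j [Mj skj]] := IH k Dk ltac:(lia).
by exists j; split => //; exact: subset_trans skj.
Qed.

End Aux.

Section Reidx.
Variable R : realType.
Local Notation lam := (@lebesgue_measure R).

Definition eidx (n : nat) : int * int := odflt (0, 0) (unpickle n).
Definition Pidx (S : set (int * int)) : set nat := pickle @` S.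

Lemma Pidx_bij S : set_bij (Pidx S) S eidx.
Proof.
split.
- by move=> n [i Si <-]; rewrite /eidx pickleK.
- by move=> n1 n2; rewrite !inE => -[i1 _ <-] [i2 _ <-]; rewrite /eidx !pickleK /= => ->.
- by move=> i Si; exists (pickle i); [exists i|rewrite /eidx pickleK].
Qed.

Lemma bigcup_re (T : Type) S (F : int * int -> set T) :
  \bigcup_(i in S) F i = \bigcup_(n in Pidx S) F (eidx n).
Proof.
apply/seteqP; split => [x [i Si Fx]|x [n [i Si <-]]].
  by exists (pickle i); [exists i|rewrite /eidx pickleK].
by rewrite /eidx pickleK => Fx; exists i.
Qed.

Lemma esum_re S (a : int * int -> \bar R) : (forall i, S i -> (0 <= a i)%E) ->
  \esum_(i in S) a i = (\sum_(n <oo | n \in Pidx S) a (eidx n))%E.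
Proof.
move=> a0; rewrite (reindex_esum (Pidx S) S eidx).
rewrite nneseries_esum ?set_mem_set //.
  by move=> n; rewrite inE => -[i Si <-]; rewrite /eidx pickleK; exact: a0.
exact: Pidx_bij.
Qed.

Lemma meas_bigcup S (F : int * int -> set R) :
  (forall i, S i -> measurable (F i)) -> measurable (\bigcup_(i in S) F i).
Proof.
move=> mF; rewrite bigcup_re; apply: bigcup_measurable => n [i Si <-].
by rewrite /eidx pickleK; exact: mF.
Qed.

Lemma lam_bigcup_disj S (F : int * int -> set R) :
  (forall i, S i -> measurable (F i)) ->
  (forall i j, S i -> S j -> F i `&` F j !=set0 -> i = j) ->
  lam (\bigcup_(i in S) F i) = \esum_(i in S) lam (F i).
Proof.
move=> mF tF; rewrite esum_re // bigcup_re measure_bigcup //.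
  by move=> n [i Si <-]; rewrite /eidx pickleK; exact: mF.
move=> n1 n2 [i1 S1 <-] [i2 S2 <-]; rewrite /eidx !pickleK => /(tF _ _ S1 S2).
by move=> ->.
Qed.

Lemma lam_bigcup_sub S (F : int * int -> set R) :
  (forall i, S i -> measurable (F i)) ->
  (lam (\bigcup_(i in S) F i) <= \esum_(i in S) lam (F i))%E.
Proof.
move=> mF; rewrite esum_re // bigcup_re eseries_mkcond.
have mF' n : measurable (if n \in Pidx S then F (eidx n) else set0).
  case: ifP => // /set_mem [i Si <-]; rewrite /eidx pickleK; exact: mF.
rewrite (eq_eseriesr (g := fun n => lam (if n \in Pidx S then F (eidx n) else set0))); last first.
  by move=> n _; case: ifP => //; rewrite measure0.
apply: measure_sigma_subadditive => //.
  by rewrite -bigcup_re; exact: meas_bigcup.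
move=> x [n Pn Fx]; exists n => //; rewrite ifT //; exact: mem_set.
Qed.

End Reidx.

Section E.
Variable R : realType.
Local Open Scope ereal_scope.

Lemma H1 (x : R) (y : \bar R) : (0 <= x)%R -> x%:E * (2^-1)%:E <= y -> x%:E <= y + y.
Proof.
case: y => [y||] hx /=.
- rewrite -EFinM -EFinD !lee_fin; lra.
- by move=> _; exact: leey.
- by rewrite -EFinM leeNy_eq.
Qed.

Lemma H2 (z y : \bar R) : 0 <= z -> z <= y + y -> (2^-1)%:E * z <= y.
Proof.
case: z => [z||]; case: y => [y||] //= h0 h1.
- move: h1; rewrite -EFinM -EFinD !lee_fin; lra.
all: try exact: leey.
Qed.

Lemma H3 (Phi : R) (z m : \bar R) : (2%:R <= Phi)%R -> 0 <= z -> 0 <= m ->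
  (2^-1)%:E * z <= m -> z <= Phi%:E * m.
Proof.
move=> hP; have hP0 : (0 < Phi)%R by lra.
case: z => [z||]; case: m => [m||] //= h0 h1 h2.
- move: h0 h1 h2; rewrite -!EFinM !lee_fin => h0 h1 h2.
  have : (0 <= (Phi - 2%:R) * m)%R by apply: mulr_ge0; lra.
  nra.
- rewrite gt0_muley; [exact: leey|exact: hP0].
- by move: h2; rewrite gt0_muley ?invr_gt0 ?ltr0n // leye_eq.
- rewrite gt0_muley; [exact: leey|exact: hP0].
Qed.
End E.

Section Main.
Variable R : realType.
Variable L : int.
Local Notation p2 l := ((2%:R : R) ^ l).
Local Notation dI := (@dyI R).
Local Notation st := (@strip R).
Local Notation lam := (@lebesgue_measure R).

Lemma lam_dyI m l : lam (dI m l) = (p2 l)%:E.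
Proof.
rewrite /dyI lebesgue_measure_itv /= ifT.
  rewrite -EFinB; congr EFin; rewrite intrD mulrDr; ring.
by rewrite lte_fin ltr_pM2l ?ltr_int ?p2_gt0 //; lia.
Qed.

Lemma meas_dyI m l : measurable (dI m l).
Proof. exact: measurable_itv. Qed.

Lemma p2_half l : p2 (l - 1) = p2 l / 2%:R.
Proof. by rewrite expfzDr ?pnatr_eq0 // -invr_expz expr1z. Qed.


Lemma find_level (s : R) : 0 < s -> s <= p2 L ->
  exists l, l <= L /\ p2 (l - 1) < s /\ s <= p2 l.
Proof.
move=> s0 sL.
have step : forall n : nat, forall l, l <= L -> s <= p2 l -> p2 (l - n%:Z) < s ->
    exists l', l' <= L /\ p2 (l' - 1) < s /\ s <= p2 l'.
  elim => [|n IH] l lL sl hn.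
    by move: hn; rewrite subr0 => hn; exfalso; move: (le_lt_trans sl hn); rewrite ltxx.
  have [h|h] := ltP (p2 (l - 1)) s.
    by exists l.
  apply: (IH (l - 1)) => //; first lia.
  have -> : l - 1 - n%:Z = l - n.+1%:Z by lia. by [].
pose n := (Num.trunc (p2 L / s)).+1.
apply: (step n L) => //.
have hn : p2 L / s < n%:R by rewrite -truncn_lt_nat ?ltnSn // divr_ge0 // ?ltW ?p2_gt0.
have h2n : (n%:R : R) <= 2%:R ^+ n by rewrite -natrX ler_nat ltnW // ltn_expl.
rewrite expfzDr ?pnatr_eq0 // -invr_expz.
rewrite -[p2 n%:Z]/(2%:R ^+ n).
have h2 : 0 < (2%:R : R) ^+ n by rewrite exprn_gt0.
rewrite ltr_pdivrMr // mulrC.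
rewrite ltr_pdivrMr // in hn.
apply: lt_le_trans hn _; rewrite ler_pM2r //.
Qed.


Lemma Q_cover (A : set (pt R)) : A `<=` YL L -> A `<=` bigstrip (Qc L A).
Proof.
move=> AY p Ap; have [s0 sL] := AY p Ap.
have [l [lL [h1 h2]]] := @find_level p.1.2 s0 sL.
have [m hm] := dyI_cover R l p.1.1.
have sp : st (m, l) p by split => //.
exists (m, l) => //; split => //; exists p; split => //; split => //.
by rewrite /sigma /= -p2_half.
Qed.

Lemma Q_sub_N (A : set (pt R)) : Qc L A `<=` Nc R L (Qc L A).
Proof.
move=> i [Di hi]; split => //.
rewrite setIidl; last first.
  by rewrite proj1_strip proj1_bigstrip => x hx; exists i.
rewrite proj1_strip lam_dyI -EFinM lee_fin.
have := p2_gt0 R i.2; lra.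
Qed.

Lemma Mc_eq (D : set (int * int)) i j : Mc R D i -> Mc R D j ->
  dI i.1 i.2 `&` dI j.1 j.2 !=set0 -> i = j.
Proof.
move=> [Di Mi] [Dj Mj] [x [xi xj]].
have [h|h] := leP i.2 j.2.
  apply: strip_inj; apply: Mi => //; apply/strip_sub; split => //.
  exact: dyI_nest xi xj.
apply/esym/strip_inj; apply: Mj => //; apply/strip_sub; split; first exact: ltW.
exact: dyI_nest (ltW h) xj xi.
Qed.

Lemma Nc_mono (D1 D2 : set (int * int)) : D1 `<=` D2 -> Nc R L D1 `<=` Nc R L D2.
Proof.
move=> D12 i [Di hi]; split => //; apply: le_trans hi _.
rewrite proj1_strip !proj1_bigstrip; apply: le_measure.
- rewrite inE; apply: measurableI; first exact: meas_dyI.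
  by apply: meas_bigcup => j _; exact: meas_dyI.
- rewrite inE; apply: measurableI; first exact: meas_dyI.
  by apply: meas_bigcup => j _; exact: meas_dyI.
- by apply: setIS => x [j /D12 Dj hx]; exists j.
Qed.

Lemma Qc_mono (A1 A2 : set (pt R)) : A1 `<=` A2 -> Qc L A1 `<=` Qc L A2.
Proof.
move=> A12 i [Di [p [hp Ap]]]; split => //; exists p; split => //; exact: A12.
Qed.


Lemma mu_bound (Phi : R) (A : set (pt R)) : 2%:R <= Phi -> A `<=` YL L ->
  (mu L (bigstrip (Mc R (Nc R L (Qc L A)))) <= Phi%:E * mu L A)%E.
Proof.
move=> hP AY.
set Q := Qc L A; set N := Nc R L Q; set C := Mc R N.
set U := \bigcup_(j in Q) dI j.1 j.2.
have mU : measurable U by apply: meas_bigcup => j _; exact: meas_dyI.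
have sig0 i : (0 <= (sigma R i)%:E)%E by rewrite lee_fin /sigma; exact: ltW (p2_gt0 R _).
have Z0 : (0 <= \esum_(i in C) (sigma R i)%:E)%E by apply: esum_ge0 => i _.
have step1 : (mu L (bigstrip C) <= \esum_(i in C) (sigma R i)%:E)%E.
  apply: ge_ereal_inf; exists (\esum_(i in C) (sigma R i)%:E) => //.
  by exists C => //; split => // i [[Di _] _].
have step2 : forall S, S `<=` DL L -> A `<=` bigstrip S ->
    (\esum_(i in C) (sigma R i)%:E <=
       \esum_(i in S) (sigma R i)%:E + \esum_(i in S) (sigma R i)%:E)%E.
  move=> S SD AS.
  have hU : U `<=` \bigcup_(k in S) dI k.1 k.2.
    move=> x [j [Dj [p [[[pj1 _] hs] Ap]]] xj].
    have [k Sk [pk1 [_ pk2]]] := AS p Ap.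
    have jk : j.2 <= k.2.
      have : p2 (j.2 - 1) < p2 k.2.
        by rewrite p2_half; apply: lt_le_trans pk2.
      by rewrite p2_lt; lia.
    by exists k => //; exact: dyI_nest jk pj1 pk1 _ xj.
  have mI i : measurable (dI i.1 i.2 `&` U) by apply: measurableI => //; exact: meas_dyI.
  rewrite (eq_esum (b := fun i => lam (dI i.1 i.2))); last by move=> i _; rewrite lam_dyI.
  apply: (@le_trans _ _ (\esum_(i in C) (lam (dI i.1 i.2 `&` U) + lam (dI i.1 i.2 `&` U)))%E).
    apply: le_esum => i [[Di hi] _].
    move: hi; rewrite proj1_strip proj1_bigstrip lam_dyI => hi.
    by apply: H1 => //; exact: ltW (p2_gt0 R _).
  rewrite esumD; [|by move=> *; exact: measure_ge0|by move=> *; exact: measure_ge0].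
  rewrite -lam_bigcup_disj //; last first.
    move=> i j Ci Cj [x [[xi _] [xj _]]]; apply: Mc_eq Ci Cj _; by exists x.
  have h3 : (lam (\bigcup_(i in C) (dI i.1 i.2 `&` U)) <= \esum_(i in S) (sigma R i)%:E)%E.
    apply: (@le_trans _ _ (lam U)).
      apply: le_measure; rewrite ?inE //; first exact: meas_bigcup.
      by move=> x [i _ [_ xU]].
    apply: (@le_trans _ _ (lam (\bigcup_(k in S) dI k.1 k.2))).
      apply: le_measure; rewrite ?inE //.
      by apply: meas_bigcup => k _; exact: meas_dyI.
    apply: (le_trans (@lam_bigcup_sub R S (fun k => dI k.1 k.2) _)); first by move=> k _; exact: meas_dyI.
    by apply: le_esum => k _; rewrite lam_dyI.
  by apply: leeD.
have hM : ((2^-1)%:E * (\esum_(i in C) (sigma R i)%:E) <= mu L A)%E.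
  rewrite /mu; apply/ereal_infP => _ [S [SD AS] <-]; apply: H2 => //; exact: step2.
have M0 : (0 <= mu L A)%E.
  by rewrite /mu; apply/ereal_infP => _ [S _ <-]; apply: esum_ge0.
exact: le_trans step1 (@H3 R Phi _ _ hP Z0 M0 hM).
Qed.

End Main.

Theorem lemma4p5 (R : realType) (L : int) (Phi : R) :
  2%:R <= Phi ->
  @mu_covering_function R L (fun A : set (pt R) => @Mc R (@Nc R L (@Qc R L A))) Phi.
Proof.
move=> hP.
have NDL : forall D, Nc R L D `<=` DL L by move=> D i [].
split.
- move=> A AY; split.
  + by move=> i [[Di _] _].
  + move=> i j Ci Cj neq; rewrite -subset0 => x [xi xj]; apply: neq.
    have [h|h] := @strip_meet R i j (ex_intro _ x (conj xi xj)).
      exact: Ci.2 j Cj.1 h.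
    exact/esym/(Cj.2 i Ci.1 h).
  + move=> p Ap; have [k Qk pk] := @Q_cover R L A AY p Ap.
    have [j [Cj kj]] := @exists_max R L _ k (NDL _) (@Q_sub_N R L A k Qk).
    by exists j => //; exact: kj.
  + exact: mu_bound.
- move=> A1 A2 _ _ A12 p [i Ci pi].
  have Ni := @Nc_mono R L _ _ (@Qc_mono R L _ _ A12) i Ci.1.
  have [j [Cj ij]] := @exists_max R L _ i (NDL _) Ni.
  by exists j => //; exact: ij.
Qed.
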